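(* Let $n\ge0$, let $\chi$ be a primitive Dirichlet character of conductor $q$ with $\gcd(q,N)=1$, let $\phi$ be a test function as in the context, and let $x>10^6$. Then $$\Big|\sum_{j\ge1}\Lambda_{\mathrm{Sym}^nf\otimes\chi}(j)\phi_x(j)-\sum_{p\nmid N}U_n(\cos\theta_p)\log(p)\chi(p)\phi_x(p)\Big|\le 9.06(n+1)\sqrt{x}+2(n+1)\log N,$$ where the second sum is over primes $p$.
   Context: $f\in S_k^{\mathrm{new}}(\Gamma_0(N))$ is a newform of even weight $k$ and squarefree level $N$. For each prime $p\nmid N$, $\theta_p\in[0,\pi]$ is defined by $a_f(p)=2p^{(k-1)/2}\cos\theta_p$. $U_n$ is the Chebyshev polynomial of the second kind: $U_n(\cos\theta)=\sin((n+1)\theta)/\sin\theta$. Twisted symmetric power $L$-function (for $\mathrm{Re}(s)>1$): $$L(s,\mathrm{Sym}^n f\otimes\chi)=\prod_{p\mid N}\big(1-(-\lambda_p p^{-1/2})^n\chi(p)p^{-s}\big)^{-1}\prod_{p\nmid N}\prod_{j=0}^{n}\big(1-e^{i(2j-n)\theta_p}\chi(p)p^{-s}\big)^{-1},$$ where $\lambda_p\in\{\pm1\}$ is the eigenvalue of the Atkin–Lehner operator $W(p)$ on $f$. The numbers $\Lambda_{\mathrm{Sym}^nf\otimes\chi}(j)$ are defined by $-\frac{L'}{L}(s,\mathrm{Sym}^nf\otimes\chi)=\sum_{j\ge1}\Lambda_{\mathrm{Sym}^nf\otimes\chi}(j)j^{-s}$ for $\mathrm{Re}(s)>1$. Test function: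 $\phi:\mathbb R\to\mathbb R$ is infinitely differentiable, $0\le\phi(t)\le 2$, with support contained in $[1/2,5/2]$; $\phi_x(t)=\phi(t/x)$. *)

(* Defs.v *)
From Stdlib Require Import Reals Lra Lia Arith ZArith Znumtheory List.
Open Scope R_scope.

Definition CC := (R * R)%type.
Definition C0 : CC := (0, 0).
Definition C1 : CC := (1, 0).
Definition Cadd (z w : CC) : CC := (fst z + fst w, snd z + snd w).
Definition Csub (z w : CC) : CC := (fst z - fst w, snd z - snd w).
Definition Cmul (z w : CC) : CC :=
  (fst z * fst w - snd z * snd w, fst z * snd w + snd z * fst w).
Definition Cscale (r : R) (z : CC) : CC := (r * fst z, r * snd z).
Fixpoint Cpow (z : CC) (m : nat) : CC :=
  match m with O => C1 | S m' => Cmul z (Cpow z m') end.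
Definition Cexpi (t : R) : CC := (cos t, sin t).
Definition Cnorm (z : CC) : R := sqrt (fst z ^ 2 + snd z ^ 2).
(** Csum a b f = f a + f (a+1) + ... + f b  (empty if b < a) *)
Definition Csum (a b : nat) (f : nat -> CC) : CC :=
  fold_right (fun j acc => Cadd (f j) acc) C0 (seq a (S b - a)).

Definition nprime (p : nat) : Prop := prime (Z.of_nat p).

Definition squarefree (N : nat) : Prop :=
  forall p, nprime p -> ~ Nat.divide (p * p) N.

Definition dirichlet_char (q : nat) (chi : nat -> CC) : Prop :=
  (1 <= q)%nat /\
  chi 1%nat = C1 /\
  (forall a b, chi (a * b)%nat = Cmul (chi a) (chi b)) /\
  (forall a, chi (a + q)%nat = chi a) /\
  (forall a, chi a = C0 <-> Nat.gcd a q <> 1%nat).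

(** Primitive of conductor q: not induced from any modulus d | q, d < q,
    i.e. for each such d, chi is nontrivial on {a : gcd(a,q)=1, a = 1 mod d}. *)
Definition primitive_char (q : nat) (chi : nat -> CC) : Prop :=
  dirichlet_char q chi /\
  forall d, Nat.divide d q -> (d < q)%nat ->
    exists a, Nat.gcd a q = 1%nat /\ Nat.modulo a d = Nat.modulo 1 d /\ chi a <> C1.

(** Chebyshev polynomials of the second kind: U_0 = 1, U_1 = 2t,
    U_{n+1} = 2t U_n - U_{n-1}.  chebU_aux n t = (U_n t, U_{n+1} t). *)
Fixpoint chebU_aux (n : nat) (t : R) : R * R :=
  match n with
  | O => (1, 2 * t)
  | S n' => let (a, b) := chebU_aux n' t in (b, 2 * t * b - a)
  end.
Definition chebU (n : nat) (t : R) : R := fst (chebU_aux n t).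

Definition smooth (phi : R -> R) : Prop :=
  exists D : nat -> R -> R, D 0%nat = phi /\
    forall k t, derivable_pt_lim (D k) t (D (S k) t).

Definition test_fun (phi : R -> R) : Prop :=
  smooth phi /\ (forall t, 0 <= phi t <= 2) /\
  (forall t, phi t <> 0 -> 1/2 <= t <= 5/2).

(** Euler-product local roots: for p | N the single root
    (-lam_p p^{-1/2})^n chi(p); for p not dividing N the roots
    e^{i(2i-n)theta_p} chi(p), i = 0..n.
    -L'/L = sum_p sum_{m>=1} log p (sum of m-th powers of roots) p^{-ms},
    so Lambda(p^m) = log p * (sum of roots^m), Lambda(j) = 0 otherwise. *)
Definition LambdaSym (N n : nat) (theta lam : nat -> R) (chi : nat -> CC)
  (j : nat) : CC :=
  Csum 2 j (fun p => Csum 1 j (fun m =>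
    if prime_dec (Z.of_nat p) then
      if Nat.eqb j (p ^ m)%nat then
        Cscale (ln (INR p))
          (if Nat.eqb (Nat.modulo N p) 0%nat
           then Cpow (Cscale ((- lam p / sqrt (INR p)) ^ n) (chi p)) m
           else Csum 0 n (fun i =>
                  Cpow (Cmul (Cexpi ((2 * INR i - INR n) * theta p)) (chi p)) m))
      else C0
    else C0)).

(* Main.v *)
Require Import Defs.
From Stdlib Require Import Reals Arith ZArith Znumtheory List Lia Lra.
From Coquelicot Require Complex.
From mathcomp Require ssreflect ssrnat prime binomial bigop zify.

Module ChebM.
From mathcomp Require Import all_boot zify.
Set Implicit Arguments. Unset Strict Implicit.
Local Open Scope nat_scope.
Lemma sum_binom n : \sum_(0 <= i < n.+1) 'C(n, i) = 2 ^ n.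
Proof.
have := expnDn 1 1 n; rewrite add1n => ->.
rewrite big_mkord; apply: eq_bigr => i _; by rewrite !exp1n !muln1.
Qed.

Lemma binom_mid m : 'C(m.*2.+1, m) <= 4 ^ m.
Proof.
have h := sum_binom m.*2.+1.
have e : 'C(m.*2.+1, m.+1) = 'C(m.*2.+1, m).
  rewrite -bin_sub; last by rewrite -addnn ?ltnS ?leq_addr; lia.
  congr 'C(_, _); rewrite -addnn; lia.
have : 'C(m.*2.+1, m) + 'C(m.*2.+1, m.+1) <= 2 ^ m.*2.+1.
  rewrite -h (big_cat_nat _ (n:=m)) //=; last by rewrite -!addnn; lia.
  rewrite [X in _ <= _ + X]big_ltn; last by rewrite -!addnn; lia.
  rewrite [X in _ <= _ + (_ + X)]big_ltn; last by rewrite -!addnn; lia.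
  lia.
rewrite e expnS -muln2 mulnC expnM.
have -> : 2 ^ 2 = 4 by [].
lia.
Qed.

Lemma prime_dvd_fact_le p k : prime p -> p %| k`! -> p <= k.
Proof.
move=> pp; elim: k => [|k IH].
  rewrite fact0 dvdn1 => /eqP p1; by rewrite p1 in pp.
rewrite factS Euclid_dvdM // => /orP [h|h].
  by apply: dvdn_leq.
by apply: leq_trans (IH h) _.
Qed.

Lemma prod_primes_dvd (P : pred nat) a b c : 0 < c ->
  (forall p, a <= p < b -> prime p -> P p -> p %| c) ->
  \prod_(a <= p < b | prime p && P p) p %| c.
Proof.
move=> c0; elim: b => [|b IH] H.
  by rewrite big_geq.
case: (leqP a b) => ab; last by rewrite big_geq.
rewrite big_mkcond big_nat_recr //= -big_mkcond.
have IH' := IH (fun p hp => H p (ltac:(lia))).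
case: ifP => hb; last by rewrite muln1.
move/andP: hb => [pb Pb].
rewrite Gauss_dvd; first by rewrite IH' H //; lia.
rewrite coprime_sym.
rewrite big_nat_cond.
apply: (big_ind (fun y => coprime b y)).
- exact: coprimen1.
- by move=> y z hy hz; rewrite coprimeMr hy hz.
- move=> i /andP [/andP [_ hi] /andP [pi _]].
  rewrite prime_coprime // dvdn_prime2 //.
  apply/negP => /eqP e; lia.
Qed.

Lemma prime_dvd_mid m p : prime p -> m.+1 < p <= m.*2.+1 -> p %| 'C(m.*2.+1, m).
Proof.
move=> pp hp.
have hf := bin_fact (n:=m.*2.+1) (m:=m) ltac:(lia).
have e : m.*2.+1 - m = m.+1 by lia.
rewrite e in hf.
have : p %| (m.*2.+1)`! by apply: dvdn_fact; lia.
rewrite -hf Euclid_dvdM // Euclid_dvdM // => /orP [//|/orP [h|h]].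
  have := prime_dvd_fact_le pp h; lia.
have := prime_dvd_fact_le pp h; lia.
Qed.

Lemma cheb_prod n : \prod_(0 <= p < n.+1 | prime p) p <= 4 ^ n.
Proof.
elim/ltn_ind: n => n IH.
case: n IH => [|[|[|n]]] IH; try by rewrite unlock.
case/boolP: (odd n) => hn.
-
  rewrite big_mkcond big_nat_recr //= -big_mkcond.
  have np : ~~ prime n.+3.
    apply/negP => pr.
    have : 2 %| n.+3 by rewrite dvdn2 /= !negbK.
    by rewrite dvdn_prime2 // => /eqP; lia.
  rewrite (negbTE np) muln1.
  apply: leq_trans (IH n.+2 (ltnSn _)) _.
  by rewrite leq_exp2l.
-
  set m := (n.+2)./2.
  have hm : n.+3 = m.*2.+1.
    have h := odd_double_half n.+2.
    rewrite /= negbK (negbTE hn) /= add0n -/m in h.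
    lia.
  rewrite hm (big_cat_nat _ (n:=m.+2)) //=; last by lia.
  have h1 : \prod_(0 <= p < m.+2 | prime p) p <= 4 ^ m.+1.
    apply: IH; lia.
  have h2 : \prod_(m.+2 <= p < m.*2.+2 | prime p) p <= 4 ^ m.
    apply: leq_trans (binom_mid m).
    apply: dvdn_leq; first by rewrite bin_gt0; lia.
    have := @prod_primes_dvd predT (m.+2) (m.*2.+2) ('C(m.*2.+1, m)).
    rewrite (eq_bigl (fun p => prime p)); last by move=> i; rewrite andbT.
    apply; first by rewrite bin_gt0; lia.
    move=> p hp pp _; apply: prime_dvd_mid => //; lia.
  apply: leq_trans (leq_mul h1 h2) _.
  rewrite -expnD.
  have -> : m.+1 + m = m.*2.+1 by lia.
  done.
Qed.
Lemma primeZ_iff p : Znumtheory.prime (Z.of_nat p) <-> prime p.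
Proof.
split.
- move=> H; apply/primeP; split.
    have := @prime_ge_2 _ H; lia.
  move=> d /dvdnP [k hk].
  have hd : (Z.of_nat d | Z.of_nat p)%Z.
    exists (Z.of_nat k); rewrite hk; lia.
  have := @prime_divisors _ H _ hd.
  move=> h.
  case: h => [h|[h|[h|h]]]; lia.
- move/primeP => [p1 hd]; apply/prime_alt; split; first lia.
  move=> n hn [z hz].
  have hz0 : (0 < z)%Z by nia.
  have := hd (Z.to_nat n).
  have hdv : Z.to_nat n %| p.
    apply/dvdnP; exists (Z.to_nat z); lia.
  move=> /(_ hdv) /orP [/eqP e|/eqP e]; lia.
Qed.

Lemma mod_bridge N p : (0 < p)%coq_nat -> (Nat.eqb (Nat.modulo N p) 0 = true) <-> p %| N.
Proof.
move=> hp; rewrite PeanoNat.Nat.eqb_eq PeanoNat.Nat.Lcm0.mod_divide; split.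
- move=> [k hk]; apply/dvdnP; exists k; lia.
- move/dvdnP => [k hk]; exists k; lia.
Qed.

Fixpoint Pprod (c : nat -> bool) (K : nat) : nat :=
  match K with O => 1%N | S K' => (Pprod c K' * (if c (S K') then S K' else 1))%N end.

Lemma Pprod_big c K : c 0 = false -> Pprod c K = \prod_(0 <= p < K.+1 | c p) p.
Proof.
move=> c0; elim: K => [|K IH] /=.
  by rewrite big_mkcond big_nat1 c0.
by rewrite IH [RHS]big_mkcond big_nat_recr //= -big_mkcond.
Qed.

Lemma cheb_Pprod K : (Pprod (fun p => prime p) K <= 4 ^ K)%coq_nat.
Proof. apply/leP; rewrite Pprod_big //; exact: cheb_prod. Qed.

Lemma divN_Pprod N K : (0 < N)%coq_nat ->
  (Pprod (fun p => prime p && (p %| N)) K <= N)%coq_nat.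
Proof.
move=> /ltP N0; apply/leP; rewrite Pprod_big //.
apply: dvdn_leq => //; apply: prod_primes_dvd => //.
Qed.

Lemma Pprod_pos c K : (0 < Pprod c K)%coq_nat.
Proof. elim: K => [|K IH] /=; first lia. case: (c K.+1); lia. Qed.

Lemma expn_pow m k : expn m k = Nat.pow m k.
Proof. elim: k => [|k IH] //=. by rewrite expnS IH. Qed.

Lemma cheb_Pprod' K : (Pprod (fun p => prime p) K <= Nat.pow 4 K)%coq_nat.
Proof. rewrite -expn_pow; exact: cheb_Pprod. Qed.

Lemma primeb_Z p : prime p = true <-> Znumtheory.prime (Z.of_nat p).
Proof. rewrite primeZ_iff. done. Qed.

Lemma dvdb_mod N p : (0 < p)%coq_nat -> (dvdn p N = Nat.eqb (Nat.modulo N p) 0).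
Proof.
move=> hp. apply/idP/idP.
- by move=> h; apply/mod_bridge.
- by move=> h; apply/(mod_bridge N hp).
Qed.
End ChebM.

Open Scope R_scope.

Definition Rl (l : list nat) (f : nat -> R) : R :=
  fold_right (fun j acc => f j + acc) 0 l.
Definition Rsum (a b : nat) (f : nat -> R) : R := Rl (seq a (S b - a)) f.

Lemma Rl_app l1 l2 f : Rl (l1 ++ l2) f = Rl l1 f + Rl l2 f.
Proof. induction l1; simpl; [lra|rewrite IHl1; lra]. Qed.

Lemma Rl_le l f g : (forall j, In j l -> f j <= g j) -> Rl l f <= Rl l g.
Proof.
induction l; simpl; intros H; [lra|].
apply Rplus_le_compat; auto.
Qed.

Lemma Rl_ext l f g : (forall j, In j l -> f j = g j) -> Rl l f = Rl l g.
Proof.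
induction l; simpl; intros H; [lra|].
rewrite H, IHl; auto.
Qed.

Lemma Rl_nonneg l f : (forall j, In j l -> 0 <= f j) -> 0 <= Rl l f.
Proof.
induction l; simpl; intros H; [lra|].
apply Rplus_le_le_0_compat; auto.
Qed.

Lemma Rl_plus l f g : Rl l (fun j => f j + g j) = Rl l f + Rl l g.
Proof. induction l; simpl; [lra|rewrite IHl; lra]. Qed.

Lemma Rl_scal l c f : Rl l (fun j => c * f j) = c * Rl l f.
Proof. induction l; simpl; [lra|rewrite IHl; lra]. Qed.

Lemma Rl_const l c : Rl l (fun _ => c) = INR (length l) * c.
Proof.
induction l; simpl length; [simpl; lra|].
rewrite S_INR; simpl; rewrite IHl; lra.
Qed.

Lemma Rl_exchange l1 l2 (F : nat -> nat -> R) :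
  Rl l1 (fun j => Rl l2 (F j)) = Rl l2 (fun p => Rl l1 (fun j => F j p)).
Proof.
induction l1; simpl.
- induction l2; simpl; [lra|rewrite <- IHl2; lra].
- rewrite IHl1. rewrite <- Rl_plus. reflexivity.
Qed.

Lemma Rl_delta_le l k v : NoDup l -> 0 <= v ->
  Rl l (fun j => if Nat.eqb j k then v else 0) <= v.
Proof.
induction l as [|a l IH]; simpl; intros Hnd Hv; [lra|].
inversion Hnd; subst.
destruct (Nat.eqb a k) eqn:E.
- apply Nat.eqb_eq in E; subst.
  rewrite (Rl_ext _ _ (fun _ => 0)).
  + rewrite Rl_const; lra.
  + intros j Hj. destruct (Nat.eqb j k) eqn:E2; auto.
    apply Nat.eqb_eq in E2; subst; contradiction.
- specialize (IH H2 Hv); lra.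
Qed.

Lemma Rl_cons a l f : Rl (a :: l) f = f a + Rl l f.
Proof. reflexivity. Qed.

Lemma Rl_elem_le l f k : In k l -> (forall j, In j l -> 0 <= f j) -> f k <= Rl l f.
Proof.
induction l as [|a l IH]; intros Hk Hf; [contradiction|].
rewrite Rl_cons. simpl in Hk.
destruct Hk as [->|Hk].
- assert (0 <= Rl l f) by (apply Rl_nonneg; intros j Hj; apply Hf; simpl; auto). lra.
- assert (0 <= f a) by (apply Hf; simpl; auto). specialize (IH Hk (fun j H => Hf j (or_intror H))). lra.
Qed.

Lemma Rsum_succ a b f : (a <= S b)%nat -> Rsum a (S b) f = Rsum a b f + f (S b).
Proof.
intros H. unfold Rsum.
replace (S (S b) - a)%nat with ((S b - a) + 1)%nat by lia.
rewrite seq_app, Rl_app.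
replace (a + (S b - a))%nat with (S b) by lia.
assert (E: Rl (seq (S b) 1) f = f (S b)) by (simpl; lra). rewrite E. lra.
Qed.

Lemma Rsum_extend a b c f : (a <= S b)%nat -> (b <= c)%nat ->
  (forall i, (b < i <= c)%nat -> f i = 0) -> Rsum a b f = Rsum a c f.
Proof.
intros H1 H2 H3. unfold Rsum.
replace (S c - a)%nat with ((S b - a) + (c - b))%nat by lia.
rewrite seq_app, Rl_app.
rewrite (Rl_ext (seq (a + (S b - a)) (c - b)) f (fun _ => 0)).
- rewrite Rl_const; lra.
- intros j Hj. apply in_seq in Hj. apply H3; lia.
Qed.

Lemma Rl_tele g s a k :
  Rl (seq a k) (fun m => g m - g (m + s)%nat) = Rl (seq a s) g - Rl (seq (a + k) s) g.
Proof.
revert a; induction k; intros a; simpl.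
- replace (a + 0)%nat with a by lia. lra.
- rewrite IHk.
  assert (E : Rl (seq a (S s)) g = g a + Rl (seq (S a) s) g) by reflexivity.
  replace (S s) with (s + 1)%nat in E by lia.
  rewrite seq_app, Rl_app in E. simpl in E.
  replace (a + S k)%nat with (S a + k)%nat by lia.
  lra.
Qed.

Definition Cl (l : list nat) (f : nat -> CC) : CC :=
  fold_right (fun j acc => Cadd (f j) acc) C0 l.

Lemma Csum_Cl a b f : Csum a b f = Cl (seq a (S b - a)) f.
Proof. reflexivity. Qed.

Lemma Cnorm_add z w : Cnorm (Cadd z w) <= Cnorm z + Cnorm w.
Proof. exact (Complex.Cmod_triangle z w). Qed.

Lemma Cnorm_mul z w : Cnorm (Cmul z w) = Cnorm z * Cnorm w.
Proof. exact (Complex.Cmod_mult z w). Qed.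

Lemma Cnorm_nonneg z : 0 <= Cnorm z.
Proof. apply sqrt_pos. Qed.

Lemma Cnorm_C0 : Cnorm C0 = 0.
Proof. unfold Cnorm, C0; cbn [fst snd]. replace (0^2 + 0^2) with 0 by ring. apply sqrt_0. Qed.

Lemma Cnorm_C1 : Cnorm Defs.C1 = 1.
Proof. unfold Cnorm, Defs.C1; cbn [fst snd]. replace (1^2 + 0^2) with 1 by ring. apply sqrt_1. Qed.

Lemma Cnorm_scale r z : Cnorm (Cscale r z) = Rabs r * Cnorm z.
Proof.
replace (Cscale r z) with (Cmul (r, 0) z).
- rewrite Cnorm_mul. f_equal. unfold Cnorm; cbn [fst snd].
  replace (r ^ 2 + 0 ^ 2) with (r * r) by ring.
  rewrite <- Rsqr_def. apply sqrt_Rsqr_abs.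
- destruct z; unfold Cmul, Cscale; simpl; f_equal; ring.
Qed.

Lemma Cnorm_sub z w : Cnorm (Csub z w) <= Cnorm z + Cnorm w.
Proof.
replace (Csub z w) with (Cadd z (Cscale (-1) w)).
- eapply Rle_trans; [apply Cnorm_add|]. rewrite Cnorm_scale.
  replace (Rabs (-1)) with 1 by (rewrite Rabs_left; lra). lra.
- destruct z, w; unfold Cadd, Csub, Cscale; simpl; f_equal; ring.
Qed.

Lemma Cnorm_Cl l f : Cnorm (Cl l f) <= Rl l (fun j => Cnorm (f j)).
Proof.
induction l; simpl.
- rewrite Cnorm_C0; lra.
- eapply Rle_trans; [apply Cnorm_add|]. lra.
Qed.

Lemma Cl_sub l f g : Csub (Cl l f) (Cl l g) = Cl l (fun j => Csub (f j) (g j)).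
Proof.
induction l; simpl.
- unfold Csub, C0; simpl; f_equal; ring.
- rewrite <- IHl. destruct (f a), (g a), (Cl l f), (Cl l g).
  unfold Csub, Cadd; simpl; f_equal; ring.
Qed.

Lemma Cl_add l f g : Cl l (fun j => Cadd (f j) (g j)) = Cadd (Cl l f) (Cl l g).
Proof.
induction l; simpl.
- unfold Cadd, C0; simpl; f_equal; ring.
- rewrite IHl. destruct (f a), (g a), (Cl l f), (Cl l g).
  unfold Cadd; simpl; f_equal; ring.
Qed.

Lemma Cl_mulr l f z : Cl l (fun j => Cmul (f j) z) = Cmul (Cl l f) z.
Proof.
induction l; simpl.
- unfold Cmul, C0; simpl; f_equal; ring.
- rewrite IHl. destruct (f a), (Cl l f), z.
  unfold Cadd, Cmul; simpl; f_equal; ring.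
Qed.

Lemma Cl_zero l f : (forall j, In j l -> f j = C0) -> Cl l f = C0.
Proof.
induction l as [|a l IH]; simpl; intros H; auto.
rewrite H by auto. rewrite IH by auto. unfold Cadd, C0; simpl; f_equal; ring.
Qed.

Lemma Cl_delta l f k : NoDup l -> (forall p, p <> k -> f p = C0) ->
  (In k l \/ f k = C0) -> Cl l f = f k.
Proof.
induction l as [|a l IH]; simpl; intros Hnd Hf Hk.
- destruct Hk as [[]|Hk]; auto.
- inversion Hnd; subst.
  destruct (Nat.eq_dec a k) as [->|Hne].
  + rewrite Cl_zero.
    * destruct (f k); unfold Cadd, C0; simpl; f_equal; ring.
    * intros j Hj; apply Hf; intros ->; contradiction.
  + rewrite Hf by auto. rewrite IH; auto.
    * destruct (f k); unfold Cadd, C0; simpl; f_equal; ring.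
    * destruct Hk as [[->|Hk]|Hk]; auto; contradiction.
Qed.

Lemma chebU_0 t : chebU 0 t = 1. Proof. reflexivity. Qed.
Lemma chebU_1 t : chebU 1 t = 2 * t. Proof. reflexivity. Qed.
Lemma chebU_rec n t : chebU (S (S n)) t = 2 * t * chebU (S n) t - chebU n t.
Proof.
unfold chebU. simpl. destruct (chebU_aux n t) as [a b]. simpl. reflexivity.
Qed.

Lemma cheb_trig th n :
  sin th * chebU n (cos th) = sin (INR (S n) * th) /\
  chebU (S n) (cos th) = cos th * chebU n (cos th) + cos (INR (S n) * th).
Proof.
assert (H : forall n,
  (sin th * chebU n (cos th) = sin (INR (S n) * th) /\
   chebU (S n) (cos th) = cos th * chebU n (cos th) + cos (INR (S n) * th)) /\
  (sin th * chebU (S n) (cos th) = sin (INR (S (S n)) * th) /\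
   chebU (S (S n)) (cos th) = cos th * chebU (S n) (cos th) + cos (INR (S (S n)) * th))).
{ induction n0 as [|k IH].
  - rewrite chebU_rec, chebU_1, chebU_0.
    replace (INR 1 * th) with th by (simpl; ring).
    replace (INR 2 * th) with (th + th) by (simpl; ring).
    replace (INR 3 * th) with (th + th + th) by (simpl; ring).
    rewrite !sin_plus, !cos_plus.
    pose proof (sin2_cos2 th). unfold Rsqr in *.
    repeat split; nra.
  - destruct IH as [[A1 B1] [A2 B2]].
    split; [split; assumption|].
    set (a := INR (S (S k)) * th).
    assert (E1 : INR (S (S (S k))) * th = a + th) by (unfold a; rewrite !S_INR; ring).
    assert (E0 : INR (S k) * th = a - th) by (unfold a; rewrite !S_INR; ring).
    rewrite E0 in A1, B1. fold a in A2, B2.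
    rewrite E1.
    rewrite sin_plus, cos_plus. rewrite sin_minus, cos_minus in *.
    pose proof (sin2_cos2 th). unfold Rsqr in *.
    assert (R2 := chebU_rec k (cos th)).
    assert (R3 := chebU_rec (S k) (cos th)).
    set (U0 := chebU k (cos th)) in *.
    set (U1 := chebU (S k) (cos th)) in *.
    set (U2 := chebU (S (S k)) (cos th)) in *.
    set (U3 := chebU (S (S (S k))) (cos th)) in *.
    rewrite <- A2 in *.
    split.
    + rewrite R2. 
      replace (sin th * (2 * cos th * U1 - U0)) with (2 * cos th * (sin th * U1) - sin th * U0) by ring.
      rewrite A1. ring.
    + rewrite R3, B2.
      replace (2 * cos th * (cos th * U1 + cos a) - U1) with
        (2 * cos th * (cos th * U1 + cos a) - (sin th * sin th + cos th * cos th) * U1)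
        by (rewrite H; ring).
      ring. }
apply H.
Qed.

Lemma Cexpi_plus a b : Cexpi (a + b) = Cmul (Cexpi a) (Cexpi b).
Proof. unfold Cexpi, Cmul; simpl. rewrite cos_plus, sin_plus. f_equal; ring. Qed.

Lemma Cl_ext_aux l f g : (forall j, In j l -> f j = g j) -> Cl l f = Cl l g.
Proof. induction l; simpl; intros H; auto. rewrite H, IHl; auto. Qed.

Lemma Csum_cheb th n :
  Csum 0 n (fun i => Cexpi ((2 * INR i - INR n) * th)) = (chebU n (cos th), 0).
Proof.
induction n as [|n IH].
- unfold Csum; simpl. unfold Cexpi, Cadd, C0; simpl.
  replace ((2 * 0 - 0) * th) with 0 by ring. rewrite cos_0, sin_0, chebU_0. f_equal; ring.
- rewrite Csum_Cl in *. replace (S (S n) - 0)%nat with (S n - 0 + 1)%nat by lia.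
  rewrite seq_app.
  assert (Happ : forall l1 l2 f, Cl (l1 ++ l2) f = Cadd (Cl l1 f) (Cl l2 f)).
  { intros l1 l2 f; induction l1; simpl.
    - destruct (Cl l2 f); unfold Cadd, C0; simpl; f_equal; ring.
    - rewrite IHl1. destruct (f a), (Cl l1 f), (Cl l2 f); unfold Cadd; simpl; f_equal; ring. }
  rewrite Happ.
  rewrite (Cl_ext_aux _ _ (fun i => Cmul (Cexpi ((2 * INR i - INR n) * th)) (Cexpi (- th)))).
  + rewrite Cl_mulr, IH. replace (0 + (S n - 0))%nat with (S n) by lia.
    change (Cl (seq (S n) 1) ?f) with (Cadd (f (S n)) C0).
    destruct (cheb_trig th n) as [A B].
    replace ((2 * INR (S n) - INR (S n)) * th) with (INR (S n) * th) by ring.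
    unfold Cexpi, Cmul, Cadd, C0; cbn [fst snd].
    rewrite cos_neg, sin_neg.
    f_equal.
    * rewrite B. ring.
    * rewrite <- A. ring.
  + intros j Hj. rewrite <- Cexpi_plus. f_equal. rewrite S_INR. ring.
Qed.

Lemma Cnorm_Cexpi t : Cnorm (Cexpi t) = 1.
Proof.
unfold Cnorm, Cexpi; cbn [fst snd].
replace (cos t ^ 2 + sin t ^ 2) with 1. apply sqrt_1.
pose proof (sin2_cos2 t). unfold Rsqr in H. nra.
Qed.

Lemma Cnorm_Cpow z m : Cnorm (Cpow z m) = Cnorm z ^ m.
Proof.
induction m; simpl.
- apply Cnorm_C1.
- rewrite Cnorm_mul, IHm. ring.
Qed.

Lemma Cpow_1 z : Cpow z 1 = z.
Proof. destruct z; unfold Cpow, Cmul, Defs.C1; cbn [fst snd]; f_equal; ring. Qed.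

Lemma chi_bound q chi : dirichlet_char q chi -> forall a, Cnorm (chi a) <= 1.
Proof.
intros [Hq [H1 [Hm [Hp Hz]]]] a.
assert (Hper : forall r k, chi (r + k * q)%nat = chi r).
{ intros r k; induction k; simpl.
  - f_equal; lia.
  - replace (r + (q + k * q))%nat with (r + k * q + q)%nat by lia. rewrite Hp. auto. }
set (B := Rl (seq 0 q) (fun r => Cnorm (chi r))).
assert (HB : forall b, Cnorm (chi b) <= B).
{ intros b. rewrite (Nat.div_mod_eq b q).
  replace (q * (b / q) + b mod q)%nat with (b mod q + (b / q) * q)%nat by lia.
  rewrite Hper. unfold B. apply (Rl_elem_le _ (fun r => Cnorm (chi r))).
  - apply in_seq. pose proof (Nat.mod_upper_bound b q). lia.
  - intros; apply Cnorm_nonneg. }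
assert (Hpow : forall k, Cnorm (chi (a ^ k)%nat) = Cnorm (chi a) ^ k).
{ induction k; simpl.
  - rewrite H1. apply Cnorm_C1.
  - rewrite Hm, Cnorm_mul, IHk. ring. }
destruct (Rle_or_lt (Cnorm (chi a)) 1) as [Hle|Hgt]; auto.
exfalso.
assert (Habs : Rabs (Cnorm (chi a)) > 1) by (rewrite Rabs_right; [lra|apply Rle_ge, Cnorm_nonneg]).
destruct (Pow_x_infinity _ Habs (B + 1)) as [K HK].
specialize (HK K (le_n K)).
rewrite <- RPow_abs, Rabs_right in HK.
- rewrite <- Hpow in HK. specialize (HB (a ^ K)%nat). lra.
- apply Rle_ge, Cnorm_nonneg.
Qed.

Lemma ln_le x y : 0 < x -> x <= y -> ln x <= ln y.
Proof. intros H1 [H2|H2]; [left; apply ln_increasing; lra|subst; lra]. Qed.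

Lemma ln2_le : ln 2 <= 71/100.
Proof.
assert (Hsq : forall a l, 0 <= l -> l <= exp a -> l * l <= exp (2 * a)).
{ intros a l Hl Ha. replace (2 * a) with (a + a) by ring. rewrite exp_plus.
  apply Rmult_le_compat; lra. }
set (t := 71/6400).
assert (H0 : 1 + t <= exp t) by apply exp_ineq1_le.
assert (H1 : 102231/100000 <= exp (2 * t)).
{ apply Rle_trans with ((1 + t) * (1 + t)); [unfold t; nra | apply Hsq; [unfold t; lra | exact H0]]. }
assert (H2 : 1045117/1000000 <= exp (2 * (2 * t))).
{ apply Rle_trans with ((102231/100000) * (102231/100000)); [unfold t; nra | apply Hsq; [unfold t; lra | exact H1]]. }
assert (H3 : 1092269/1000000 <= exp (2 * (2 * (2 * t)))).
{ apply Rle_trans with ((1045117/1000000) * (1045117/1000000)); [unfold t; nra | apply Hsq; [unfold t; lra | exact H2]]. }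
assert (H4 : 1193051/1000000 <= exp (2 * (2 * (2 * (2 * t))))).
{ apply Rle_trans with ((1092269/1000000) * (1092269/1000000)); [unfold t; nra | apply Hsq; [unfold t; lra | exact H3]]. }
assert (H5 : 142337/100000 <= exp (2 * (2 * (2 * (2 * (2 * t)))))).
{ apply Rle_trans with ((1193051/1000000) * (1193051/1000000)); [unfold t; nra | apply Hsq; [unfold t; lra | exact H4]]. }
assert (H6 : 2 <= exp (2 * (2 * (2 * (2 * (2 * (2 * t))))))).
{ apply Rle_trans with ((142337/100000) * (142337/100000)); [unfold t; nra | apply Hsq; [unfold t; lra | exact H5]]. }
replace (2 * (2 * (2 * (2 * (2 * (2 * t)))))) with (71/100) in H6 by (unfold t; field).
rewrite <- (ln_exp (71/100)). apply ln_le; lra.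
Qed.

Lemma Rsum_first a b f : (a <= b)%nat -> Rsum a b f = f a + Rsum (S a) b f.
Proof.
intros H. unfold Rsum.
replace (S b - a)%nat with (S (S b - S a)) by lia. reflexivity.
Qed.

Lemma Rsum_Pprod c K : c 0%nat = false ->
  Rsum 1 K (fun j => if c j then ln (INR j) else 0) = ln (INR (ChebM.Pprod c K)).
Proof.
intros c0. induction K.
- unfold Rsum; simpl. symmetry; apply ln_1.
- rewrite Rsum_succ by lia. rewrite IHK.
  change (ChebM.Pprod c (S K)) with (Nat.mul (ChebM.Pprod c K) (if c (S K) then S K else 1%nat)).
  pose proof (ChebM.Pprod_pos c K).
  rewrite mult_INR, ln_mult.
  + destruct (c (S K)); [lra|simpl; rewrite ln_1; lra].
  + apply lt_0_INR; lia.
  + destruct (c (S K)); apply lt_0_INR; lia.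
Qed.

Lemma prime_dec_b p : (if prime_dec (Z.of_nat p) then true else false) = prime.prime p.
Proof.
destruct (prime_dec (Z.of_nat p)) as [Hp|Hp].
- symmetry; apply ChebM.primeb_Z; auto.
- destruct (prime.prime p) eqn:E; auto. apply ChebM.primeb_Z in E. contradiction.
Qed.

Lemma prime_ge2 p : prime (Z.of_nat p) -> (2 <= p)%nat.
Proof. intros H. apply prime_ge_2 in H. lia. Qed.

Lemma theta_bound K :
  Rsum 2 K (fun p => if prime_dec (Z.of_nat p) then ln (INR p) else 0) <= INR K * ln 4.
Proof.
assert (E : Rsum 1 K (fun j => if prime.prime j then ln (INR j) else 0) =
            Rsum 2 K (fun p => if prime_dec (Z.of_nat p) then ln (INR p) else 0)).
{ destruct K.
  - reflexivity.
  - rewrite Rsum_first by lia.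
    replace (prime.prime 1) with false by reflexivity.
    unfold Rsum. rewrite Rplus_0_l. apply Rl_ext. intros j Hj.
    rewrite <- prime_dec_b. destruct (prime_dec (Z.of_nat j)); reflexivity. }
rewrite <- E, Rsum_Pprod by reflexivity.
rewrite <- ln_pow by lra. apply ln_le.
- apply lt_0_INR, ChebM.Pprod_pos.
- replace 4 with (INR 4) by (simpl; ring). rewrite <- pow_INR.
  apply le_INR. apply ChebM.cheb_Pprod'.
Qed.

Lemma sumN_bound N M : (1 <= N)%nat ->
  Rsum 1 M (fun j => if prime_dec (Z.of_nat j) then
                       if Nat.eqb (Nat.modulo N j) 0 then ln (INR j) else 0 else 0)
  <= ln (INR N).
Proof.
intros HN. unfold Rsum.
rewrite (Rl_ext _ _ (fun j => if (prime.prime j && div.dvdn j N)%bool then ln (INR j) else 0)).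
- fold (Rsum 1 M (fun j => if (prime.prime j && div.dvdn j N)%bool then ln (INR j) else 0)).
  rewrite (Rsum_Pprod (fun j => (prime.prime j && div.dvdn j N)%bool)) by reflexivity.
  apply ln_le.
  + apply lt_0_INR, ChebM.Pprod_pos.
  + apply le_INR. apply ChebM.divN_Pprod. lia.
- intros j _. pose proof (prime_dec_b j) as Hb.
  destruct (prime_dec (Z.of_nat j)) as [Hp|Hp].
  + rewrite <- Hb. simpl. rewrite ChebM.dvdb_mod.
    * destruct (Nat.eqb (N mod j) 0); reflexivity.
    * apply prime_ge2 in Hp. lia.
  + rewrite <- Hb. reflexivity.
Qed.

Lemma floor_nat r : 0 <= r -> exists K : nat, INR K <= r < INR K + 1.
Proof.
intros Hr. destruct (base_Int_part r) as [H1 H2].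
assert (Hz : (0 <= Int_part r)%Z).
{ assert (Hl : (-1 < Int_part r)%Z) by (apply lt_IZR; simpl; lra). lia. }
exists (Z.to_nat (Int_part r)).
rewrite INR_IZR_INZ, Z2Nat.id by exact Hz. lra.
Qed.

Lemma ln_INR_nonneg p : (1 <= p)%nat -> 0 <= ln (INR p).
Proof.
intros H. rewrite <- ln_1. apply ln_le; [lra|]. apply (le_INR 1). exact H.
Qed.

Lemma pow_ge_base p m : (1 <= p)%nat -> (1 <= m)%nat -> (p <= p ^ m)%nat.
Proof.
intros Hp Hm. rewrite <- (Nat.pow_1_r p) at 1. apply Nat.pow_le_mono_r; lia.
Qed.

Lemma pow_gt_exp p m : (2 <= p)%nat -> (m < p ^ m)%nat.
Proof. intros Hp. apply Nat.pow_gt_lin_r. lia. Qed.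

Definition Hf (x : R) (j p m : nat) : R :=
  if prime_dec (Z.of_nat p) then
    if Nat.eqb j (p ^ m) then
      (if Rle_dec (x/2) (INR j) then if Rle_dec (INR j) (5/2*x) then ln (INR p) else 0 else 0)
    else 0
  else 0.

Definition hf (x : R) (p m : nat) : R :=
  if prime_dec (Z.of_nat p) then
    (if Rle_dec (x/2) (INR (p ^ m)) then if Rle_dec (INR (p ^ m)) (5/2*x) then ln (INR p) else 0 else 0)
  else 0.

Definition wf (x : R) (p : nat) : R :=
  if prime_dec (Z.of_nat p) then
    2 * (if Rle_dec (INR (p * p)) (5/2*x) then ln (INR p) else 0)
    + (if Nat.eqb p 2 then ln (INR p) else 0)
  else 0.

Lemma Hf_zero x j p m : (j < p ^ m)%nat -> Hf x j p m = 0.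
Proof.
intros H. unfold Hf. destruct (prime_dec _); auto.
replace (Nat.eqb j (p ^ m)) with false; auto.
symmetry; apply Nat.eqb_neq; lia.
Qed.

Lemma Hf_nonneg x j p m : 0 <= Hf x j p m.
Proof.
unfold Hf. destruct (prime_dec _) as [Hp|]; [|lra].
apply prime_ge2 in Hp.
destruct (Nat.eqb _ _); [|lra].
destruct (Rle_dec _ _); [|lra]. destruct (Rle_dec _ _); [|lra].
apply ln_INR_nonneg; lia.
Qed.

Lemma hf_nonneg x p m : 0 <= hf x p m.
Proof.
unfold hf. destruct (prime_dec _) as [Hp|]; [|lra].
apply prime_ge2 in Hp.
destruct (Rle_dec _ _); [|lra]. destruct (Rle_dec _ _); [|lra].
apply ln_INR_nonneg; lia.
Qed.

Lemma Rl_zero l f : (forall j, In j l -> f j = 0) -> Rl l f = 0.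
Proof. intros H. rewrite (Rl_ext _ _ (fun _ => 0)) by auto. rewrite Rl_const. ring. Qed.

Lemma step1 x M j : (1 <= j <= M)%nat ->
  Rsum 2 j (fun p => Rsum 2 j (Hf x j p)) = Rsum 2 M (fun p => Rsum 2 M (Hf x j p)).
Proof.
intros Hj.
transitivity (Rsum 2 j (fun p => Rsum 2 M (Hf x j p))).
- unfold Rsum at 1 3. apply Rl_ext. intros p Hp. apply in_seq in Hp.
  apply Rsum_extend; try lia.
  intros i Hi. apply Hf_zero. pose proof (pow_gt_exp p i ltac:(lia)). lia.
- apply Rsum_extend; try lia.
  intros p Hp. apply Rl_zero. intros i Hi. apply in_seq in Hi.
  apply Hf_zero. pose proof (pow_ge_base p i ltac:(lia) ltac:(lia)). lia.
Qed.

Lemma step3 x M p m :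
  Rsum 1 M (fun j => Hf x j p m) <= hf x p m.
Proof.
unfold Rsum.
rewrite (Rl_ext _ _ (fun j => if Nat.eqb j (p ^ m) then hf x p m else 0)).
- apply Rl_delta_le; [apply seq_NoDup|apply hf_nonneg].
- intros j _. unfold Hf, hf.
  destruct (Nat.eqb j (p ^ m)) eqn:E.
  + apply Nat.eqb_eq in E. subst. reflexivity.
  + destruct (prime_dec _); reflexivity.
Qed.

Lemma indic_tele x p m s : 0 < x -> (2 <= p)%nat -> 8 <= INR (p ^ s) ->
  let g := fun k => if Rle_dec (INR (p ^ k)) (5/2*x) then 1 else 0 in
  (if Rle_dec (x/2) (INR (p ^ m)) then if Rle_dec (INR (p ^ m)) (5/2*x) then ln (INR p) else 0 else 0)
  <= ln (INR p) * (g m - g (m + s)%nat).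
Proof.
intros Hx Hp Hs g.
assert (Hl : 0 <= ln (INR p)) by (apply ln_INR_nonneg; lia).
assert (Hm : INR (p ^ (m + s)) = INR (p ^ m) * INR (p ^ s)) by (rewrite Nat.pow_add_r, mult_INR; reflexivity).
assert (H0 : 0 <= INR (p ^ m)) by apply pos_INR.
assert (Hge : g (m + s)%nat <= g m).
{ unfold g. destruct (Rle_dec (INR (p ^ (m + s))) _) as [h|h]; destruct (Rle_dec (INR (p ^ m)) _) as [h'|h']; try lra.
  exfalso; apply h'. rewrite Hm in h. nra. }
assert (Hg01 : forall k, 0 <= g k <= 1) by (intros k; unfold g; destruct (Rle_dec _ _); lra).
destruct (Rle_dec (x/2) (INR (p ^ m))) as [h1|h1].
- destruct (Rle_dec (INR (p ^ m)) (5/2*x)) as [h2|h2].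
  + assert (E1 : g m = 1) by (unfold g; destruct (Rle_dec _ _); [reflexivity|contradiction]).
    assert (E2 : g (m + s)%nat = 0).
    { unfold g. destruct (Rle_dec _ _) as [h|h]; [|reflexivity].
      rewrite Hm in h. nra. }
    rewrite E1, E2. lra.
  + apply Rmult_le_pos; lra.
- apply Rmult_le_pos; lra.
Qed.

Lemma step4 x M p : 0 < x -> Rsum 2 M (hf x p) <= wf x p.
Proof.
intros Hx. unfold wf.
destruct (prime_dec (Z.of_nat p)) as [Hpr|Hpr].
2:{ unfold Rsum; rewrite Rl_zero; [lra|]. intros j _. unfold hf. destruct (prime_dec _); [contradiction|reflexivity]. }
pose proof (prime_ge2 _ Hpr) as Hp.
assert (Hl : 0 <= ln (INR p)) by (apply ln_INR_nonneg; lia).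
set (s := if Nat.eqb p 2 then 3%nat else 2%nat).
assert (Hs : 8 <= INR (p ^ s)).
{ unfold s. destruct (Nat.eqb p 2) eqn:E.
  - apply Nat.eqb_eq in E; subst. simpl. lra.
  - apply Nat.eqb_neq in E. rewrite pow_INR.
    assert (3 <= INR p) by (replace 3 with (INR 3) by (simpl; ring); apply le_INR; lia). simpl. nra. }
set (g := fun k => if Rle_dec (INR (p ^ k)) (5/2*x) then 1 else 0).
assert (Hg01 : forall k, 0 <= g k <= 1) by (intros k; unfold g; destruct (Rle_dec _ _); lra).
assert (Hmono : forall k, (2 <= k)%nat -> g k <= g 2%nat).
{ intros k Hk. unfold g. destruct (Rle_dec (INR (p ^ k)) _) as [h|h]; destruct (Rle_dec (INR (p ^ 2)) _) as [h'|h']; try lra.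
  exfalso; apply h'. eapply Rle_trans; [|exact h]. apply le_INR, Nat.pow_le_mono_r; lia. }
unfold Rsum.
apply Rle_trans with (Rl (seq 2 (S M - 2)) (fun m => ln (INR p) * (g m - g (m + s)%nat))).
{ apply Rl_le. intros m _. unfold hf. destruct (prime_dec _); [|contradiction].
  apply indic_tele; auto. }
rewrite Rl_scal, Rl_tele.
assert (HA : 0 <= Rl (seq (2 + (S M - 2)) s) g) by (apply Rl_nonneg; intros; apply Hg01).
assert (HB : Rl (seq 2 s) g <= INR s * g 2%nat).
{ rewrite <- (length_seq s 2) at 2. rewrite <- Rl_const. apply Rl_le.
  intros j Hj. apply in_seq in Hj. apply Hmono; lia. }
assert (Eg : g 2%nat = if Rle_dec (INR (p * p)) (5/2*x) then 1 else 0).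
{ unfold g. rewrite Nat.pow_2_r. reflexivity. }
assert (Hc : (if Rle_dec (INR (p * p)) (5/2*x) then ln (INR p) else 0) = ln (INR p) * g 2%nat).
{ rewrite Eg. destruct (Rle_dec _ _); ring. }
rewrite Hc.
specialize (Hg01 2%nat).
set (A := Rl (seq (2 + (S M - 2)) s) g) in *.
set (B := Rl (seq 2 s) g) in *.
assert (T1 : ln (INR p) * A >= 0) by (apply Rle_ge, Rmult_le_pos; lra).
assert (T2 : ln (INR p) * B <= ln (INR p) * (INR s * g 2%nat)) by (apply Rmult_le_compat_l; lra).
assert (T3 : ln (INR p) * g 2%nat <= ln (INR p)) by (rewrite <- (Rmult_1_r (ln (INR p))) at 2; apply Rmult_le_compat_l; lra).
unfold s in T2. destruct (Nat.eqb p 2) eqn:E.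
- replace (INR 3) with 3 in T2 by (simpl; ring). nra.
- replace (INR 2) with 2 in T2 by (simpl; ring). nra.
Qed.

Lemma step6 x M : 1 <= 5/2*x -> 5/2*x <= INR M ->
  Rsum 2 M (fun p => if prime_dec (Z.of_nat p) then
     (if Rle_dec (INR (p * p)) (5/2*x) then ln (INR p) else 0) else 0)
  <= sqrt (5/2*x) * ln 4.
Proof.
intros HY HM. set (Y := 5/2*x) in *.
assert (HsY : 1 <= sqrt Y) by (rewrite <- sqrt_1; apply sqrt_le_1_alt; lra).
assert (HsYY : sqrt Y * sqrt Y = Y) by (apply sqrt_sqrt; lra).
destruct (floor_nat (sqrt Y)) as [K [HK1 HK2]]; [lra|].
assert (HK1' : (1 <= K)%nat).
{ destruct K; [simpl in HK2; lra|lia]. }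
assert (HKM : (K <= M)%nat) by (apply INR_le; nra).
set (th := fun p => if prime_dec (Z.of_nat p) then ln (INR p) else 0).
apply Rle_trans with (Rsum 2 M (fun p => if Nat.leb p K then th p else 0)).
{ apply Rl_le. intros p Hp. unfold th.
  destruct (prime_dec _) as [Hpr|]; [|destruct (Nat.leb p K); lra].
  pose proof (prime_ge2 _ Hpr).
  assert (0 <= ln (INR p)) by (apply ln_INR_nonneg; lia).
  destruct (Rle_dec _ _) as [h|h]; [|destruct (Nat.leb p K); lra].
  replace (Nat.leb p K) with true; [lra|].
  symmetry; apply Nat.leb_le.
  assert (INR p <= sqrt Y).
  { rewrite <- (sqrt_square (INR p)) by apply pos_INR.
    apply sqrt_le_1_alt. rewrite <- mult_INR. exact h. }
  assert (INR p < INR (S K)) by (rewrite S_INR; lra).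
  apply INR_lt in H2. lia. }
rewrite <- (Rsum_extend 2 K M (fun p => if Nat.leb p K then th p else 0)).
2: lia. 2: lia.
2:{ intros i Hi. replace (Nat.leb i K) with false; [reflexivity|]. symmetry; apply Nat.leb_gt; lia. }
unfold Rsum at 1. rewrite (Rl_ext _ _ th).
2:{ intros p Hp. apply in_seq in Hp. replace (Nat.leb p K) with true; [reflexivity|symmetry; apply Nat.leb_le; lia]. }
fold (Rsum 2 K th). unfold th.
eapply Rle_trans; [apply theta_bound|].
apply Rmult_le_compat_r; [|lra].
rewrite <- ln_1. apply ln_le; lra.
Qed.

Lemma SH_bound x M : 0 < x -> 1 <= 5/2*x -> 5/2*x <= INR M ->
  Rsum 1 M (fun j => Rsum 2 j (fun p => Rsum 2 j (Hf x j p)))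
  <= 2 * sqrt (5/2*x) * ln 4 + ln 2.
Proof.
intros Hx HY HM.
unfold Rsum at 1.
rewrite (Rl_ext _ _ (fun j => Rsum 2 M (fun p => Rsum 2 M (Hf x j p)))).
2:{ intros j Hj. apply in_seq in Hj. apply step1. lia. }
fold (Rsum 1 M (fun j => Rsum 2 M (fun p => Rsum 2 M (Hf x j p)))).
unfold Rsum. rewrite Rl_exchange.
apply Rle_trans with (Rl (seq 2 (S M - 2)) (wf x)).
{ apply Rl_le. intros p _. rewrite Rl_exchange.
  eapply Rle_trans; [|apply (step4 x M p Hx)].
  apply Rl_le. intros m _. apply step3. }
unfold wf.
apply Rle_trans with (Rl (seq 2 (S M - 2)) (fun p =>
   2 * (if prime_dec (Z.of_nat p) then (if Rle_dec (INR (p * p)) (5/2*x) then ln (INR p) else 0) else 0)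
   + (if Nat.eqb p 2 then ln 2 else 0))).
{ apply Rl_le. intros p _. destruct (prime_dec _).
  - destruct (Nat.eqb p 2) eqn:E; [apply Nat.eqb_eq in E; subst; replace (INR 2) with 2 by (simpl; ring); lra|lra].
  - destruct (Nat.eqb p 2); [|lra]. assert (0 <= ln 2) by (rewrite <- ln_1; apply ln_le; lra). lra. }
rewrite Rl_plus, Rl_scal.
pose proof (step6 x M HY HM). unfold Rsum in H.
assert (Rl (seq 2 (S M - 2)) (fun p => if Nat.eqb p 2 then ln 2 else 0) <= ln 2).
{ apply Rl_delta_le; [apply seq_NoDup|rewrite <- ln_1; apply ln_le; lra]. }
lra.
Qed.

Section Main.
Variables (N : nat) (theta lam : nat -> R) (n : nat) (chi : nat -> CC).

Definition Rt (p m : nat) : CC :=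
  if Nat.eqb (Nat.modulo N p) 0%nat
  then Cpow (Cscale ((- lam p / sqrt (INR p)) ^ n) (chi p)) m
  else Csum 0 n (fun i => Cpow (Cmul (Cexpi ((2 * INR i - INR n) * theta p)) (chi p)) m).

Definition Tm (j p m : nat) : CC :=
  if prime_dec (Z.of_nat p) then
    if Nat.eqb j (p ^ m)%nat then Cscale (ln (INR p)) (Rt p m) else C0
  else C0.

Lemma Lambda_Tm j : LambdaSym N n theta lam chi j = Csum 2 j (fun p => Csum 1 j (fun m => Tm j p m)).
Proof. reflexivity. Qed.

Hypothesis Hlam : forall p, nprime p -> Nat.divide p N -> lam p = 1 \/ lam p = -1.
Hypothesis Hchi : forall a, Cnorm (chi a) <= 1.

Lemma pow_le_one r k : 0 <= r <= 1 -> r ^ k <= 1.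
Proof.
intros H. induction k; simpl; [lra|].
apply Rle_trans with (1 * 1); [|lra]. apply Rmult_le_compat; try lra.
apply pow_le; lra.
Qed.

Lemma sN_bound p : prime (Z.of_nat p) -> Nat.eqb (N mod p) 0 = true ->
  Rabs ((- lam p / sqrt (INR p)) ^ n) * Cnorm (chi p) <= 1.
Proof.
intros Hp E. pose proof (prime_ge2 _ Hp) as Hp2.
assert (Hd : Nat.divide p N) by (apply Nat.Lcm0.mod_divide; apply Nat.eqb_eq in E; auto).
assert (Habs : Rabs (lam p) = 1).
{ destruct (Hlam p Hp Hd) as [Hl|Hl]; rewrite Hl; unfold Rabs; destruct (Rcase_abs _); lra. }
assert (Hs : 1 <= sqrt (INR p)) by (rewrite <- sqrt_1; apply sqrt_le_1_alt; apply (le_INR 1); lia).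
assert (Ha : Rabs (- lam p / sqrt (INR p)) <= 1).
{ unfold Rdiv. rewrite Rabs_mult, Rabs_Ropp, Habs, Rabs_inv, (Rabs_right (sqrt _)) by lra.
  rewrite Rmult_1_l. rewrite <- Rinv_1. apply Rinv_le_contravar; lra. }
assert (Hb : Rabs ((- lam p / sqrt (INR p)) ^ n) <= 1).
{ rewrite <- RPow_abs. apply pow_le_one. split; [apply Rabs_pos|exact Ha]. }
apply Rle_trans with (1 * 1); [|lra].
apply Rmult_le_compat; auto; [apply Rabs_pos|apply Cnorm_nonneg].
Qed.

Lemma Rt_bound p m : prime (Z.of_nat p) -> Cnorm (Rt p m) <= INR n + 1.
Proof.
intros Hp. pose proof (prime_ge2 _ Hp) as Hp2.
assert (Hn : 0 <= INR n) by apply pos_INR.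
unfold Rt. destruct (Nat.eqb (N mod p) 0) eqn:E.
- rewrite Cnorm_Cpow, Cnorm_scale.
  pose proof (sN_bound p Hp E).
  eapply Rle_trans; [apply pow_le_one|lra].
  split; [apply Rmult_le_pos; [apply Rabs_pos|apply Cnorm_nonneg]|auto].
- rewrite Csum_Cl. eapply Rle_trans; [apply Cnorm_Cl|].
  apply Rle_trans with (Rl (seq 0 (S n - 0)) (fun _ => 1)).
  + apply Rl_le. intros i _. rewrite Cnorm_Cpow, Cnorm_mul, Cnorm_Cexpi, Rmult_1_l.
    apply pow_le_one. split; [apply Cnorm_nonneg|auto].
  + rewrite Rl_const, length_seq. replace (S n - 0)%nat with (S n) by lia. rewrite S_INR. lra.
Qed.

Definition Gf (j p m : nat) : R :=
  if prime_dec (Z.of_nat p) then if Nat.eqb j (p ^ m)%nat then ln (INR p) else 0 else 0.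

Lemma Gf_nonneg j p m : 0 <= Gf j p m.
Proof.
unfold Gf. destruct (prime_dec _) as [Hp|]; [|lra].
destruct (Nat.eqb _ _); [|lra]. apply ln_INR_nonneg. apply prime_ge2 in Hp. lia.
Qed.

Lemma Tm_norm j p m : Cnorm (Tm j p m) <= (INR n + 1) * Gf j p m.
Proof.
unfold Tm, Gf. destruct (prime_dec _) as [Hp|Hp].
- destruct (Nat.eqb _ _).
  + rewrite Cnorm_scale. rewrite Rabs_right.
    * rewrite Rmult_comm. apply Rmult_le_compat_r.
      -- apply ln_INR_nonneg. apply prime_ge2 in Hp. lia.
      -- apply Rt_bound; auto.
    * apply Rle_ge, ln_INR_nonneg. apply prime_ge2 in Hp. lia.
  + rewrite Cnorm_C0. lra.
- rewrite Cnorm_C0. lra.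
Qed.

Lemma Tm_1 j : Csum 2 j (fun p => Tm j p 1) = Tm j j 1.
Proof.
rewrite Csum_Cl. apply (Cl_delta _ (fun p => Tm j p 1) j).
- apply seq_NoDup.
- intros p Hpj. unfold Tm. destruct (prime_dec _); auto.
  rewrite Nat.pow_1_r. replace (Nat.eqb j p) with false; auto.
  symmetry; apply Nat.eqb_neq; auto.
- destruct (le_lt_dec 2 j) as [H|H].
  + left. apply in_seq. lia.
  + right. unfold Tm. destruct (prime_dec _) as [Hp|]; auto.
    apply prime_ge2 in Hp. lia.
Qed.

Lemma Lambda_decomp j : (1 <= j)%nat ->
  LambdaSym N n theta lam chi j =
  Cadd (Tm j j 1) (Csum 2 j (fun p => Csum 2 j (Tm j p))).
Proof.
intros Hj. rewrite Lambda_Tm. rewrite <- Tm_1.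
rewrite !Csum_Cl. rewrite <- Cl_add. apply Cl_ext_aux. intros p _.
unfold Csum. replace (S j - 1)%nat with (S (S j - 2)) by lia. reflexivity.
Qed.

Variables (phi : R -> R) (x : R).
Hypothesis Hphi : forall t, 0 <= phi t <= 2.
Hypothesis Hsupp : forall t, phi t <> 0 -> 1/2 <= t <= 5/2.
Hypothesis Hx : 0 < x.

Definition Bj (p : nat) : CC :=
  if prime_dec (Z.of_nat p) then
    if Nat.eqb (Nat.modulo N p) 0%nat then C0
    else Cscale (chebU n (cos (theta p)) * ln (INR p) * phi (INR p / x)) (chi p)
  else C0.

Definition E1 (j : nat) : R :=
  if prime_dec (Z.of_nat j) then
    if Nat.eqb (Nat.modulo N j) 0 then 2 * ln (INR j) else 0 else 0.

Lemma first_part j :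
  Cnorm (Csub (Cscale (phi (INR j / x)) (Tm j j 1)) (Bj j)) <= E1 j.
Proof.
unfold Tm, Bj, E1. rewrite Nat.pow_1_r, Nat.eqb_refl.
destruct (prime_dec _) as [Hp|Hp].
- pose proof (prime_ge2 _ Hp) as Hp2.
  assert (Hl : 0 <= ln (INR j)) by (apply ln_INR_nonneg; lia).
  unfold Rt. destruct (Nat.eqb (N mod j) 0) eqn:E.
  + eapply Rle_trans; [apply Cnorm_sub|]. rewrite Cnorm_C0, Rplus_0_r.
    rewrite !Cnorm_scale.
    rewrite Cpow_1, Cnorm_scale.
    pose proof (sN_bound j Hp E).
    assert (0 <= Rabs ((- lam j / sqrt (INR j)) ^ n) * Cnorm (chi j)) by
      (apply Rmult_le_pos; [apply Rabs_pos|apply Cnorm_nonneg]).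
    rewrite (Rabs_right (ln _)) by lra. rewrite (Rabs_right (phi _)) by (apply Rle_ge, Hphi).
    pose proof (Hphi (INR j / x)).
    apply Rle_trans with (phi (INR j / x) * (ln (INR j) * 1)).
    * apply Rmult_le_compat_l; [lra|]. apply Rmult_le_compat_l; lra.
    * nra.
  + rewrite Csum_Cl.
    rewrite (Cl_ext_aux _ _ (fun i => Cmul (Cexpi ((2 * INR i - INR n) * theta j)) (chi j))).
    2:{ intros i _. apply Cpow_1. }
    rewrite Cl_mulr, <- Csum_Cl, Csum_cheb.
    replace (Csub (Cscale (phi (INR j / x)) (Cscale (ln (INR j)) (Cmul (chebU n (cos (theta j)), 0) (chi j))))
        (Cscale (chebU n (cos (theta j)) * ln (INR j) * phi (INR j / x)) (chi j))) with C0.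
    * rewrite Cnorm_C0. lra.
    * destruct (chi j). unfold Csub, Cscale, Cmul, C0. cbn [fst snd]. f_equal; ring.
- replace (Csub (Cscale (phi (INR j / x)) C0) C0) with C0.
  + rewrite Cnorm_C0. lra.
  + unfold Csub, Cscale, C0. cbn [fst snd]. f_equal; ring.
Qed.

Lemma Cnorm_Cl2 j : Cnorm (Csum 2 j (fun p => Csum 2 j (Tm j p))) <=
  (INR n + 1) * Rsum 2 j (fun p => Rsum 2 j (Gf j p)).
Proof.
rewrite Csum_Cl. eapply Rle_trans; [apply Cnorm_Cl|].
unfold Rsum. rewrite <- Rl_scal. apply Rl_le. intros p _.
rewrite Csum_Cl. eapply Rle_trans; [apply Cnorm_Cl|].
rewrite <- Rl_scal. apply Rl_le. intros m _. apply Tm_norm.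
Qed.

Lemma second_part j :
  Cnorm (Cscale (phi (INR j / x)) (Csum 2 j (fun p => Csum 2 j (Tm j p))))
  <= 2 * (INR n + 1) * Rsum 2 j (fun p => Rsum 2 j (Hf x j p)).
Proof.
rewrite Cnorm_scale. pose proof (Hphi (INR j / x)) as Hp.
rewrite Rabs_right by lra.
pose proof (Cnorm_Cl2 j) as HC.
assert (Hn : 0 <= INR n) by apply pos_INR.
assert (HG : 0 <= Rsum 2 j (fun p => Rsum 2 j (Gf j p))).
{ apply Rl_nonneg; intros; apply Rl_nonneg; intros; apply Gf_nonneg. }
assert (HH : 0 <= Rsum 2 j (fun p => Rsum 2 j (Hf x j p))).
{ apply Rl_nonneg; intros; apply Rl_nonneg; intros; apply Hf_nonneg. }
destruct (Rle_dec (x/2) (INR j)) as [h1|h1];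
  [destruct (Rle_dec (INR j) (5/2*x)) as [h2|h2]|].
- assert (E : Rsum 2 j (fun p => Rsum 2 j (Gf j p)) = Rsum 2 j (fun p => Rsum 2 j (Hf x j p))).
  { apply Rl_ext; intros p _; apply Rl_ext; intros m _. unfold Gf, Hf.
    destruct (Rle_dec _ _); [|contradiction]. destruct (Rle_dec _ _); [|contradiction]. reflexivity. }
  rewrite E in HC.
  apply Rle_trans with (phi (INR j / x) * ((INR n + 1) * Rsum 2 j (fun p => Rsum 2 j (Hf x j p)))).
  + apply Rmult_le_compat_l; lra.
  + assert (0 <= (INR n + 1) * Rsum 2 j (fun p => Rsum 2 j (Hf x j p))) by (apply Rmult_le_pos; lra).
    nra.
- assert (Z : phi (INR j / x) = 0).
  { destruct (Req_dec (phi (INR j / x)) 0) as [z|z]; auto. exfalso. apply h2.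
    apply Hsupp in z. replace (INR j) with (INR j / x * x) by (field; lra). nra. }
  rewrite Z, Rmult_0_l. apply Rmult_le_pos; lra.
- assert (Z : phi (INR j / x) = 0).
  { destruct (Req_dec (phi (INR j / x)) 0) as [z|z]; auto. exfalso. apply h1.
    apply Hsupp in z. replace (INR j) with (INR j / x * x) by (field; lra). nra. }
  rewrite Z, Rmult_0_l. apply Rmult_le_pos; lra.
Qed.

Lemma per_j j : (1 <= j)%nat ->
  Cnorm (Csub (Cscale (phi (INR j / x)) (LambdaSym N n theta lam chi j)) (Bj j))
  <= E1 j + 2 * (INR n + 1) * Rsum 2 j (fun p => Rsum 2 j (Hf x j p)).
Proof.
intros Hj. rewrite Lambda_decomp by exact Hj.
set (X := Tm j j 1). set (Y := Csum 2 j (fun p => Csum 2 j (Tm j p))).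
replace (Csub (Cscale (phi (INR j / x)) (Cadd X Y)) (Bj j))
  with (Cadd (Csub (Cscale (phi (INR j / x)) X) (Bj j)) (Cscale (phi (INR j / x)) Y)).
- eapply Rle_trans; [apply Cnorm_add|].
  apply Rplus_le_compat; [apply first_part|apply second_part].
- destruct X, Y, (Bj j). unfold Csub, Cadd, Cscale. cbn [fst snd]. f_equal; ring.
Qed.
End Main.

Lemma numeric x : x > 1000000 ->
  2 * (2 * sqrt (5/2*x) * ln 4 + ln 2) <= 906/100 * sqrt x.
Proof.
intros Hx.
rewrite sqrt_mult by lra.
assert (HA : sqrt (5/2) <= 15812/10000).
{ rewrite <- (sqrt_square (15812/10000)) by lra. apply sqrt_le_1_alt. lra. }
assert (HA0 : 0 <= sqrt (5/2)) by apply sqrt_pos.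
assert (Hs : 1000 <= sqrt x).
{ rewrite <- (sqrt_square 1000) by lra. apply sqrt_le_1_alt. lra. }
assert (H4 : ln 4 = 2 * ln 2).
{ replace 4 with (2 * 2) by ring. rewrite ln_mult by lra. ring. }
assert (HL : ln 2 <= 71/100) by apply ln2_le.
assert (HL0 : 0 <= ln 2) by (rewrite <- ln_1; apply ln_le; lra).
rewrite H4.
assert (T : sqrt (5/2) * ln 2 <= 15812/10000 * (71/100)).
{ apply Rmult_le_compat; lra. }
assert (T2 : sqrt (5/2) * ln 2 * sqrt x <= 15812/10000 * (71/100) * sqrt x).
{ apply Rmult_le_compat_r; lra. }
nra.
Qed.

Theorem mainTheorem8
  (N : nat) (theta lam : nat -> R) (n q : nat) (chi : nat -> CC)
  (phi : R -> R) (x : R) (M : nat) :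
  (1 <= N)%nat -> squarefree N ->
  (forall p, nprime p -> ~ Nat.divide p N -> 0 <= theta p <= PI) ->
  (forall p, nprime p -> Nat.divide p N -> lam p = 1 \/ lam p = -1) ->
  primitive_char q chi -> Nat.gcd q N = 1%nat ->
  test_fun phi -> x > 1000000 -> 5/2 * x <= INR M ->
  Cnorm (Csub
    (Csum 1 M (fun j => Cscale (phi (INR j / x)) (LambdaSym N n theta lam chi j)))
    (Csum 1 M (fun p =>
       if prime_dec (Z.of_nat p) then
         if Nat.eqb (Nat.modulo N p) 0%nat then C0
         else Cscale (chebU n (cos (theta p)) * ln (INR p) * phi (INR p / x)) (chi p)
       else C0)))
  <= 906/100 * (INR n + 1) * sqrt x + 2 * (INR n + 1) * ln (INR N).
Proof.
intros HN _ _ Hlam [Hdc _] _ [_ [Hphi Hsupp]] Hx HM.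
pose proof (chi_bound q chi Hdc) as Hchi.
assert (Hx0 : 0 < x) by lra.
rewrite !Csum_Cl, Cl_sub.
eapply Rle_trans; [apply Cnorm_Cl|].
apply Rle_trans with (Rl (seq 1 (S M - 1)) (fun j =>
   E1 N j + 2 * (INR n + 1) * Rsum 2 j (fun p => Rsum 2 j (Hf x j p)))).
{ apply Rl_le. intros j Hj. apply in_seq in Hj.
  apply (per_j N theta lam n chi Hlam Hchi phi x Hphi Hsupp Hx0 j). lia. }
rewrite Rl_plus, Rl_scal.
assert (HE : Rl (seq 1 (S M - 1)) (E1 N) <= 2 * ln (INR N)).
{ rewrite (Rl_ext _ _ (fun j => 2 * (if prime_dec (Z.of_nat j) then
                       if Nat.eqb (Nat.modulo N j) 0 then ln (INR j) else 0 else 0))).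
  - rewrite Rl_scal. pose proof (sumN_bound N M HN). unfold Rsum in H. lra.
  - intros j _. unfold E1. destruct (prime_dec _); [destruct (Nat.eqb _ _)|]; ring. }
pose proof (SH_bound x M Hx0 ltac:(lra) HM) as HS. unfold Rsum at 1 in HS.
pose proof (numeric x Hx) as Hnum.
assert (Hn : 0 <= INR n) by apply pos_INR.
assert (HlnN : 0 <= ln (INR N)) by (apply ln_INR_nonneg; lia).
set (S := Rl (seq 1 (S M - 1)) (fun j => Rsum 2 j (fun p => Rsum 2 j (Hf x j p)))) in *.
set (Q := 2 * sqrt (5/2*x) * ln 4 + ln 2) in *.
assert (T1 : 2 * (INR n + 1) * S <= 2 * (INR n + 1) * Q) by (apply Rmult_le_compat_l; lra).
assert (T2 : (INR n + 1) * (2 * Q) <= (INR n + 1) * (906/100 * sqrt x)) by (apply Rmult_le_compat_l; lra).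
assert (T3 : 2 * ln (INR N) <= 2 * (INR n + 1) * ln (INR N)) by nra.
nra.
Qed.
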